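(* Let $\sigma$ be a primitive substitution over a finite alphabet $\mathcal{A}$ and let $(X_\sigma,T)$ be the associated subshift. Let $v\in\mathcal{L}(X_\sigma)$ and suppose its frequency is rational, $\mu_v=p_v/q_v$ written in irreducible form. Suppose that $(X_\sigma,T)$ is balanced on $v$. Then: (1) For each $a\in\mathcal{A}$ and each return word $w$ to $a$, $q_v$ divides $|\sigma^n(w)|$ for all $n$ large enough. In particular, if $aa\in\mathcal{L}_2(X_\sigma)$, then $q_v$ divides $|\sigma^n(a)|$ for all $n$ large enough. (2) Let $a\in\mathcal{A}$ and suppose there exist $b,c\in\mathcal{A}$ such that $bac\in\mathcal{L}(X_\sigma)$ and $bc\in\mathcal{L}(X_\sigma)$. Then $q_v$ divides $|\sigma^n(a)|$ for all $n$ large enough.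
   Context: A substitution $\sigma$ on a finite alphabet $\mathcal{A}$ is a non-erasing morphism of the free monoid $\mathcal{A}^*$. Its substitution matrix $M_\sigma$ has entries $M_\sigma(a,b)=|\sigma(b)|_a$ (number of occurrences of $a$ in $\sigma(b)$); $\sigma$ is primitive if some power of $M_\sigma$ has all entries positive. $X_\sigma$ is the set of $x\in\mathcal{A}^{\mathbb Z}$ such that every finite factor of $x$ is a factor of $\sigma^n(a)$ for some $a\in\mathcal{A}$, $n\in\mathbb{N}$; $T$ is the shift. $(X_\sigma,T)$ is minimal and uniquely ergodic with invariant probability measure $\mu$. $\mathcal{L}(X_\sigma)$ is the set of finite factors of elements of $X_\sigma$, $\mathcal{L}_n(X_\sigma)$ those of length $n$. The frequency of $v$ is $\mu_v=\mu([v])$ where $[v]=\{x\in X_\sigma: x_0\cdots x_{|v|-1}=v\}$. For finite words, $|w|$ is the length and $|w|_v$ the number of occurrences of $v$ in $w$. $(X_\sigma,T)$ is balanced on $v$ if there is $C_v$ with $||w|_v-|w'|_v|\le C_v$ for all $w,w'\in\mathcal{L}(X_\sigma)$ with $|w|=|w'|$. A return word to the letter $a$ is a word $w$ such that $wa\in\mathcal{L}(X_\sigma)$ and $a$ is a prefix of $wa$. *)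

(* Defs.v *)
From HB Require Import structures.
From mathcomp Require Import all_boot all_order all_algebra.
From mathcomp Require Import reals.
Set Implicit Arguments. Unset Strict Implicit. Unset Printing Implicit Defensive.
Import Order.TTheory GRing.Theory Num.Theory.

Section Subst.
Variable (A : finType) (sigma : A -> seq A).

Definition subst_word (w : seq A) : seq A := flatten (map sigma w).
Definition subst_iter (n : nat) (w : seq A) : seq A := iter n subst_word w.

Definition nonerasing : Prop := forall a : A, 0 < size (sigma a).

Definition subst_matrix : 'M[int]_#|A| :=
  \matrix_(i < #|A|, j < #|A|) Posz (count_mem (enum_val i) (sigma (enum_val j))).

Definition primitive : Prop :=
  exists k : nat, forall i j : 'I_#|A|, (0 < (subst_matrix ^+ k) i j)%R.

Definition in_sigma_lang (u : seq A) : Prop :=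
  exists (n : nat) (a : A), infix u (subst_iter n [:: a]).

Definition factor_at (x : int -> A) (i : int) (n : nat) : seq A :=
  mkseq (fun k => x (i + k%:Z)%R) n.

Definition in_Xsigma (x : int -> A) : Prop :=
  forall (i : int) (n : nat), in_sigma_lang (factor_at x i n).

Definition inL (u : seq A) : Prop :=
  exists x : int -> A, in_Xsigma x /\ exists i : int, factor_at x i (size u) = u.

(* |w|_v : number of (possibly overlapping) occurrences of v in w *)
Definition occ (v w : seq A) : nat :=
  count (fun i => take (size v) (drop i w) == v) (iota 0 (size w - size v).+1).

Definition balanced_on (v : seq A) : Prop :=
  exists C : nat, forall w w' : seq A, inL w -> inL w' -> size w = size w' ->
    (`| Posz (occ v w) - Posz (occ v w') | <= Posz C)%R.

(* A shift-invariant Borel probability measure on X_sigma, described by its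
   values on cylinders: mu u = mu([u]) with [u] = {x in X_sigma | x_0..x_{|u|-1} = u}.
   (By Kolmogorov extension these data are exactly such measures.) *)
Definition invariant_prob_on_X (R : realType) (mu : seq A -> R) : Prop :=
  [/\ mu [::] = 1%R,
      forall u, (0 <= mu u)%R,
      forall u, ~ inL u -> mu u = 0%R,
      forall u, mu u = (\sum_(a : A) mu (rcons u a))%R
    & forall u, mu u = (\sum_(a : A) mu (a :: u))%R    (* mu(T^-1 [u]) = mu([u]) *) ].

Definition return_word (a : A) (w : seq A) : Prop :=
  inL (rcons w a) /\ prefix [:: a] (rcons w a).

Definition eventually_divides (q : nat) (w : seq A) : Prop :=
  exists N : nat, forall n : nat, N <= n -> q %| size (subst_iter n w).

End Subst.

(* Main.v *)
Require Import Defs.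
From HB Require Import structures.
From mathcomp Require Import all_boot all_order all_algebra.
From mathcomp Require Import reals.
From mathcomp Require Import zify ring lra.
From Stdlib Require Import Classical.
Import Order.TTheory GRing.Theory Num.Theory.
Set Implicit Arguments. Unset Strict Implicit. Unset Printing Implicit Defensive.

Section Comb.
Variables (A : finType) (sigma : A -> seq A).
Local Notation sw := (subst_word sigma).
Local Notation si := (subst_iter sigma).

Lemma sw_cat s t : sw (s ++ t) = sw s ++ sw t.
Proof. by rewrite /subst_word map_cat flatten_cat. Qed.

Lemma sw_cons x s : sw (x :: s) = sigma x ++ sw s.
Proof. by []. Qed.

Lemma si_cat n s t : si n (s ++ t) = si n s ++ si n t.
Proof. by elim: n => //= n IH; rewrite /subst_iter /= -!/(subst_iter _ _ _) IH sw_cat. Qed.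

Lemma siS n s : si n.+1 s = sw (si n s).
Proof. by []. Qed.

Lemma siSr n s : si n.+1 s = si n (sw s).
Proof. by rewrite /subst_iter iterSr. Qed.

Lemma siD m n s : si (m + n) s = si m (si n s).
Proof. by rewrite /subst_iter iterD. Qed.

Lemma si_cons n x s : si n (x :: s) = si n [:: x] ++ si n s.
Proof. by rewrite -cat1s si_cat. Qed.

Lemma infix_sw s t : infix s t -> infix (sw s) (sw t).
Proof.
case/infixP=> [l [r ->]]; rewrite !sw_cat; apply/infixP.
by exists (sw l), (sw r).
Qed.

Lemma infix_si n s t : infix s t -> infix (si n s) (si n t).
Proof.
case/infixP=> [l [r ->]]; rewrite !si_cat; apply/infixP.
by exists (si n l), (si n r).
Qed.

Lemma mem_infix1 (x : A) s : x \in s -> infix [:: x] s.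
Proof.
move=> xs; apply/infixP; exists (take (index x s) s), (drop (index x s).+1 s).
have H : drop (index x s) s = nth x s (index x s) :: drop (index x s).+1 s by apply: drop_nth; rewrite index_mem.
rewrite nth_index // in H.
by rewrite /= -H cat_take_drop.
Qed.

Hypothesis ne : nonerasing sigma.

Lemma size_sw s : size s <= size (sw s).
Proof.
elim: s => //= x s IH; rewrite sw_cons size_cat.
by have := ne x; lia.
Qed.

Lemma size_si n s : size s <= size (si n s).
Proof. elim: n => //= n IH; exact: leq_trans IH (size_sw _). Qed.

End Comb.

Section Shift.
Variables (A : finType) (sigma : A -> seq A).
Local Notation sw := (subst_word sigma).
Local Notation si := (subst_iter sigma).

Lemma factor_at_cat (x : int -> A) (i : int) a b :
  factor_at x i (a + b) = factor_at x i a ++ factor_at x (i + a%:Z)%R b.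
Proof.
apply: (@eq_from_nth _ (x 0%R)); first by rewrite size_cat !size_mkseq.
move=> k; rewrite size_mkseq => hk; rewrite nth_cat size_mkseq.
case: ltnP => h; rewrite !nth_mkseq //; last by lia.
congr x; rewrite -addrA -PoszD subnKC //.
Qed.

Lemma factor_at_size (x : int -> A) i n : size (factor_at x i n) = n.
Proof. by rewrite size_mkseq. Qed.

Lemma isl_sw u : in_sigma_lang sigma u -> in_sigma_lang sigma (sw u).
Proof. by case=> n [a h]; exists n.+1, a; rewrite siS; apply: infix_sw. Qed.

Lemma isl_infix u w : infix u w -> in_sigma_lang sigma w -> in_sigma_lang sigma u.
Proof. by move=> h [n [a h']]; exists n, a; apply: infix_trans h h'. Qed.

Hypothesis ne : nonerasing sigma.

Variable x : int -> A.
Local Notation Lft m := (factor_at x (- (m%:Z))%R m).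
Local Notation Rgt N := (factor_at x 0%R N).

Definition sx (z : int) : A :=
  match z with
  | Posz t => nth (x 0%R) (sw (Rgt t.+1)) t
  | Negz t => nth (x 0%R) (sw (Lft t.+1)) (size (sw (Lft t.+1)) - t.+1)
  end.

Lemma RP M1 M2 r : r < size (sw (Rgt M1)) -> r < size (sw (Rgt M2)) ->
  nth (x 0%R) (sw (Rgt M1)) r = nth (x 0%R) (sw (Rgt M2)) r.
Proof.
wlog le12 : M1 M2 / M1 <= M2.
  move=> H h1 h2; case: (leqP M1 M2) => h; first exact: H.
  by symmetry; apply: H => //; apply: ltnW.
move=> h1 h2; rewrite -(subnKC le12) factor_at_cat sw_cat nth_cat h1 //.
Qed.

Lemma LS M1 M2 r : 0 < r -> r <= size (sw (Lft M1)) -> r <= size (sw (Lft M2)) ->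
  nth (x 0%R) (sw (Lft M1)) (size (sw (Lft M1)) - r) =
  nth (x 0%R) (sw (Lft M2)) (size (sw (Lft M2)) - r).
Proof.
wlog le12 : M1 M2 / M1 <= M2.
  move=> H h0 h1 h2; case: (leqP M1 M2) => h; first exact: H.
  by symmetry; apply: H => //; apply: ltnW.
move=> h0 h1 h2.
have -> : Lft M2 = factor_at x (- (M2%:Z))%R (M2 - M1) ++ Lft M1.
  rewrite -{2}(subnK le12) factor_at_cat; congr (_ ++ factor_at _ _ _).
  lia.
rewrite sw_cat nth_cat size_cat ltnNge.
set s1 := sw _ in h1 *; set s2 := sw _.
have -> : size s2 <= size s2 + size s1 - r by lia.
congr nth; lia.
Qed.

Lemma KL m N t : t < size (sw (factor_at x (- (m%:Z))%R (m + N))) ->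
  sx (t%:Z - (size (sw (Lft m)))%:Z)%R = nth (x 0%R) (sw (factor_at x (- (m%:Z))%R (m + N))) t.
Proof.
rewrite factor_at_cat addNr sw_cat size_cat nth_cat => ht.
set pos := size (sw (Lft m)) in ht *.
case: (ltnP t pos) => h.
- have -> : (t%:Z - pos%:Z)%R = Negz (pos - t).-1.
    rewrite NegzE; lia.
  rewrite /sx prednK; last by lia.
  rewrite [in RHS](_ : t = pos - (pos - t)); last by lia.
  apply: LS; first by lia.
  + have := size_sw ne (Lft (pos - t)); rewrite factor_at_size; lia.
  + by rewrite -/pos; lia.
- have -> : (t%:Z - pos%:Z)%R = Posz (t - pos) by lia.
  rewrite /sx; apply: RP.
  + have := size_sw ne (Rgt (t - pos).+1); rewrite factor_at_size; lia.
  + by rewrite ltn_subLR.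
Qed.

Lemma sx_in_X : in_Xsigma sigma x -> in_Xsigma sigma sx.
Proof.
move=> hx j n.
set m := absz j; set N := m + n.
set big := factor_at x (- (m%:Z))%R (m + N).
set pos := size (sw (Lft m)).
have hpos : m <= pos by have := size_sw ne (Lft m); rewrite factor_at_size.
have hN : pos + N <= size (sw big).
  rewrite /big factor_at_cat sw_cat size_cat -/pos.
  by rewrite leq_add2l; have := size_sw ne (factor_at x (- m%:Z + m%:Z)%R N); rewrite factor_at_size.
set t0 := absz (j + pos%:Z)%R.
have hjm : (j <= m%:Z)%R by rewrite /m; lia.
have hjm' : (- (m%:Z) <= j)%R by rewrite /m; lia.
have ht0 : (t0%:Z = j + pos%:Z)%R by rewrite /t0; lia.
have hNn : N = m + n by [].
clearbody t0 N m.
have -> : factor_at sx j n = take n (drop t0 (sw big)).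
  apply: (@eq_from_nth _ (x 0%R)).
    rewrite size_takel ?factor_at_size // size_drop; lia.
  move=> k; rewrite factor_at_size => hk.
  rewrite nth_mkseq // nth_take // nth_drop.
  rewrite -KL; last by rewrite -/big; lia.
  congr sx; lia.
apply: (isl_infix (w := sw big)).
  by apply: infix_trans (infix_take _ _) (infix_drop _ _).
by apply: isl_sw; apply: hx.
Qed.

Lemma sx_factor i n : exists j, factor_at sx j (size (sw (factor_at x i n))) = sw (factor_at x i n).
Proof.
set m := absz i; set N := m + n.
set d := absz (i + m%:Z)%R.
have him : (i <= m%:Z)%R by rewrite /m; lia.
have him' : (- (m%:Z) <= i)%R by rewrite /m; lia.
have hd : (d%:Z = i + m%:Z)%R by rewrite /d; lia.
have hNn : N = m + n by [].
clearbody d N m.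
have hdn : d + n <= m + N by lia.
set big := factor_at x (- (m%:Z))%R (m + N).
have Hbig : big = factor_at x (- (m%:Z))%R d ++ factor_at x i n ++
                  drop (d + n) (factor_at x (- (m%:Z))%R (m + N)).
  rewrite /big -{1}(subnKC hdn) factor_at_cat factor_at_cat.
  have -> : (- m%:Z + d%:Z)%R = i by lia.
  rewrite -catA; congr (_ ++ (_ ++ _)).
  by rewrite -[in RHS](subnKC hdn) factor_at_cat drop_size_cat // factor_at_size.
set pos := size (sw (Lft m)).
set o := size (sw (factor_at x (- (m%:Z))%R d)).
exists (o%:Z - pos%:Z)%R.
apply: (@eq_from_nth _ (x 0%R)); first by rewrite factor_at_size.
move=> k; rewrite factor_at_size => hk; rewrite nth_mkseq //.
have -> : (o%:Z - pos%:Z + k%:Z)%R = ((o + k)%:Z - pos%:Z)%R by lia.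
rewrite (@KL m N); last by rewrite -/big Hbig !sw_cat !size_cat -/o; lia.
by rewrite -/big Hbig !sw_cat nth_cat -/o ltnNge leq_addr /= addKn nth_cat hk.
Qed.


End Shift.

Section Shift2.
Variables (A : finType) (sigma : A -> seq A).
Local Notation sw := (subst_word sigma).
Local Notation si := (subst_iter sigma).
Hypothesis ne : nonerasing sigma.

Lemma inL_sw u : inL sigma u -> inL sigma (sw u).
Proof.
case=> y [hy [i hi]].
have [j hj] := sx_factor ne y i (size u).
exists (sx sigma y); split; first exact: sx_in_X.
by exists j; rewrite -hi.
Qed.

Lemma inL_si n u : inL sigma u -> inL sigma (si n u).
Proof. by elim: n => // n IH /IH; rewrite siS; apply: inL_sw. Qed.

Lemma inL_factor Y i m : inL sigma Y -> i + m <= size Y -> inL sigma (take m (drop i Y)).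
Proof.
case=> x [hx [j hj]] h; exists x; split => //; exists (j + i%:Z)%R.
apply: (@eq_from_nth _ (x 0%R)).
  by rewrite size_mkseq size_takel // size_drop; lia.
move=> k; rewrite size_mkseq => hk.
have hk' : k < m by move: hk; rewrite size_takel // size_drop; lia.
rewrite nth_mkseq // nth_take // nth_drop -{1}hj nth_mkseq; last by lia.
by rewrite -addrA -PoszD.
Qed.

Lemma inL_isl u : inL sigma u -> in_sigma_lang sigma u.
Proof. by case=> x [hx [i <-]]; apply: hx. Qed.
End Shift2.

Section Prim.
Local Open Scope int_scope.
Variables (A : finType) (sigma : A -> seq A).
Local Notation sw := (subst_word sigma).
Local Notation si := (subst_iter sigma).

Lemma si_nil n : si n [::] = [::].
Proof. by elim: n => // n IH; rewrite siS IH. Qed.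

Lemma count_si k (x : A) s : (count_mem x (si k s))%:Z =
  (\sum_(l < #|A|) (count_mem (enum_val l) s)%:Z * (count_mem x (si k [:: enum_val l]))%:Z)%R.
Proof.
elim: s => [|y s IH].
  by rewrite si_nil /= big1 // => l _; rewrite mul0r.
rewrite si_cons count_cat PoszD IH.
have cc : forall l, count_mem (enum_val l) (y :: s) = (y == enum_val l) + count_mem (enum_val l) s by [].
symmetry; under eq_bigr => l _ do rewrite cc PoszD mulrDl.
rewrite big_split /=; congr (_ + _)%R.
rewrite (bigD1 (enum_rank y)) //= enum_rankK eqxx mul1r big1 ?addr0 //.
move=> l hl; case: eqP => [e|]; last by rewrite mul0r.
by move: hl; rewrite e enum_valK eqxx.
Qed.

Lemma mx_pow k (i j : 'I_#|A|) :
  (subst_matrix sigma ^+ k)%R i j = (count_mem (enum_val i) (si k [:: enum_val j]))%:Z.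
Proof.
elim: k i j => [|k IH] i j.
  rewrite expr0 -idmxE mxE /=.
  by rewrite (inj_eq enum_val_inj) eq_sym addn0; case: eqP.
rewrite exprSr -mulmxE mxE siSr.
have -> : sw [:: enum_val j] = sigma (enum_val j) by rewrite /subst_word /= cats0.
rewrite count_si; apply: eq_bigr => l _.
by rewrite IH mxE mulrC.
Qed.

Hypothesis ne : nonerasing sigma.

Lemma prim_mem : primitive sigma -> exists k, forall j, k <= j -> forall e e' : A, e' \in si j [:: e].
Proof.
case=> k hk; exists k => j hkj e e'.
have hk' : forall e e' : A, e' \in si k [:: e].
  move=> a b; have := hk (enum_rank b) (enum_rank a).
  by rewrite mx_pow !enum_rankK -has_pred1 has_count; lia.
rewrite -(subnKC hkj) siD.
have : 0 < size (si (j - k) [:: e]) by have := size_si ne (j - k) [:: e].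
case E: (si (j - k) [:: e]) => [|d s] // _.
rewrite si_cons mem_cat; apply/orP; left.
rewrite -(cats0 [:: d]). rewrite si_cat si_nil cats0. exact: hk'.
Qed.

Lemma eventually_in u : primitive sigma -> in_sigma_lang sigma u ->
  exists N, forall n, N <= n -> forall e : A, infix u (si n [:: e]).
Proof.
move=> hp [n1 [d hd]]; have [k hk] := prim_mem hp.
exists (k + n1) => n hn e.
have h1 : n1 <= n by lia.
rewrite -(subnKC h1) siD.
apply: infix_trans hd _.
apply: infix_si. have hm : d \in si (n - n1) [:: e] by apply: hk; lia.
exact: (mem_infix1 hm).
Qed.
End Prim.

Section SumW.
Variables (A : finType) (R : realType).
Local Open Scope ring_scope.

Fixpoint sumW (n : nat) (g : seq A -> R) : R :=
  if n is n'.+1 then \sum_(a : A) sumW n' (fun r => g (a :: r)) else g [::].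

Lemma sumW_ext n g h : (forall u, size u = n -> g u = h u) -> sumW n g = sumW n h.
Proof.
elim: n g h => [|n IH] g h H /=; first exact: H.
by apply: eq_bigr => a _; apply: IH => u hu; apply: H; rewrite /= hu.
Qed.

Lemma sumW_le n g h : (forall u, size u = n -> g u <= h u) -> sumW n g <= sumW n h.
Proof.
elim: n g h => [|n IH] g h H /=; first exact: H.
by apply: ler_sum => a _; apply: IH => u hu; apply: H; rewrite /= hu.
Qed.

Lemma sumW_add n g h : sumW n (fun u => g u + h u) = sumW n g + sumW n h.
Proof.
elim: n g h => [|n IH] g h //=.
by rewrite -big_split; apply: eq_bigr => a _; rewrite IH.
Qed.

Lemma sumW_scale n c g : sumW n (fun u => c * g u) = c * sumW n g.
Proof.
elim: n g => [|n IH] g //=.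
by rewrite mulr_sumr; apply: eq_bigr => a _; rewrite IH.
Qed.

Lemma sumW0 n : sumW n (fun _ => 0) = 0.
Proof. by elim: n => //= n IH; rewrite big1. Qed.

Lemma sumW_sum n (I : finType) (g : I -> seq A -> R) :
  sumW n (fun u => \sum_i g i u) = \sum_i sumW n (g i).
Proof.
elim: n g => [|n IH] g //=.
rewrite exchange_big /=; apply: eq_bigr => a _; exact: IH.
Qed.

Lemma sumW_split i j g : sumW (i + j) g = sumW i (fun l => sumW j (fun r => g (l ++ r))).
Proof.
elim: i g => [|i IH] g //=.
by apply: eq_bigr => a _; rewrite IH.
Qed.

Lemma sumW_last n g : sumW n.+1 g = sumW n (fun l => \sum_a g (rcons l a)).
Proof.
rewrite -addn1 sumW_split; apply: sumW_ext => l _ /=.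
by apply: eq_bigr => a _; rewrite cats1.
Qed.

Lemma sumW_sel (v : seq A) h : sumW (size v) (fun m => if m == v then h m else 0) = h v.
Proof.
elim: v h => [|b v IH] h /=; first by [].
rewrite (bigD1 b) //= big1 ?addr0.
  rewrite -(IH (fun r => h (b :: r))); apply: sumW_ext => u _.
  by rewrite eqseq_cons eqxx.
move=> a hab; apply: etrans (sumW0 (size v)); apply: sumW_ext => u _.
by rewrite eqseq_cons (negbTE hab).
Qed.

End SumW.

Section Meas.
Variables (A : finType) (sigma : A -> seq A) (R : realType) (mu : seq A -> R).
Local Open Scope ring_scope.
Hypothesis hmu : invariant_prob_on_X sigma mu.

Lemma mu_right s j : sumW j (fun r => mu (s ++ r)) = mu s.
Proof.
case: hmu => _ _ _ hr _.
elim: j => [|j IH]; first by rewrite /= cats0.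
rewrite sumW_last -[RHS]IH; apply: sumW_ext => l _.
by rewrite [RHS]hr; apply: eq_bigr => a _; rewrite rcons_cat.
Qed.

Lemma mu_left s i : sumW i (fun l => mu (l ++ s)) = mu s.
Proof.
case: hmu => _ _ _ _ hl.
elim: i => [|i IH] //=.
rewrite -(sumW_sum i (fun a l => mu (a :: l ++ s))) -[RHS]IH.
by apply: sumW_ext => l _; rewrite [RHS]hl.
Qed.

Lemma mu_total N : sumW N mu = 1.
Proof.
case: hmu => h1 _ _ _ _.
by rewrite -h1 -(mu_right [::] N).
Qed.

Variable v : seq A.
Local Notation K := (size v).

Lemma mu_window N r : (r + K <= N)%N ->
  sumW N (fun u => mu u * (take K (drop r u) == v)%:R) = mu v.
Proof.
move=> h; rewrite (_ : N = r + (K + (N - (r + K))))%N; last by lia.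
rewrite sumW_split; apply: etrans (mu_left v r); apply: sumW_ext => l hl.
rewrite sumW_split; apply: etrans (sumW_sel v (fun m => mu (l ++ m))).
apply: sumW_ext => m hm.
have E : forall t, take K (drop r (l ++ (m ++ t))) = m.
  by move=> t; rewrite -hl drop_size_cat // -hm take_size_cat.
case: eqP => [em|ne].
  rewrite -(mu_right (l ++ m) (N - (r + K))); apply: sumW_ext => t _.
  by rewrite E em eqxx mulr1 catA.
transitivity (sumW (N - (r + K)) (fun _ : seq A => 0 : R)); last exact: sumW0.
apply: sumW_ext => t _.
by rewrite E; case: eqP => // _; rewrite mulr0.
Qed.

Lemma mu_count N (s : seq nat) : (forall r, r \in s -> (r + K <= N)%N) ->
  sumW N (fun u => mu u * (count (fun r => take K (drop r u) == v) s)%:R) = (size s)%:R * mu v.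
Proof.
elim: s => [|r s IH] hs /=.
  rewrite mul0r; transitivity (sumW N (fun _ : seq A => 0 : R)); last exact: sumW0.
  by apply: sumW_ext => u _; rewrite mulr0.
rewrite (_ : (size s).+1%:R * mu v = mu v + (size s)%:R * mu v); last first.
  by rewrite -addn1 natrD mulrDl mul1r addrC.
rewrite -IH; last by move=> t ht; apply: hs; rewrite inE ht orbT.
rewrite -{1}(mu_window (hs r (mem_head _ _))).
rewrite -sumW_add; apply: sumW_ext => u _.
by rewrite natrD mulrDr.
Qed.

Lemma mu_occ N : (K <= N)%N -> sumW N (fun u => mu u * (occ v u)%:R) = (N - K + 1)%N%:R * mu v.
Proof.
move=> hN.
rewrite addn1 -[in RHS](size_iota 0 (N - K).+1) -(@mu_count N); last first.
  by move=> r; rewrite mem_iota; lia.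
by apply: sumW_ext => u hu; rewrite /occ hu.
Qed.

Lemma mu_bound C : (forall w w' : seq A, inL sigma w -> inL sigma w' -> size w = size w' ->
    (`| Posz (occ v w) - Posz (occ v w') | <= Posz C)%R) ->
  forall u0, inL sigma u0 -> (K <= size u0)%N ->
  `| (occ v u0)%:R - (size u0 - K + 1)%N%:R * mu v | <= C%:R.
Proof.
move=> hb u0 hu0 hK.
case: hmu => _ h0 hL _ _.
set N := size u0.
have E : (occ v u0)%:R - (N - K + 1)%N%:R * mu v =
         sumW N (fun u => mu u * ((occ v u0)%:R - (occ v u)%:R)).
  rewrite -mu_occ //.
  transitivity (sumW N (fun u => (occ v u0)%:R * mu u + (-1) * (mu u * (occ v u)%:R))).
    by rewrite sumW_add !sumW_scale mu_total mulr1 mulN1r.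
  by apply: sumW_ext => u _; rewrite mulN1r mulrBr mulrC.
have key : forall u, size u = N -> mu u * ((occ v u0)%:R - (occ v u)%:R) <= mu u * C%:R
    /\ - (mu u * C%:R) <= mu u * ((occ v u0)%:R - (occ v u)%:R).
  move=> u hu.
  case: (classic (inL sigma u)) => [hin|hnin].
    have := hb u0 u hu0 hin (esym hu).
    rewrite ler_norml => /andP[h1 h2].
    have h1' : (occ v u <= occ v u0 + C)%N by lia.
    have h2' : (occ v u0 <= occ v u + C)%N by lia.
    split.
      apply: ler_wpM2l; first exact: h0.
      by move: h2'; rewrite -(ler_nat R) natrD; lra.
    rewrite -mulrN; apply: ler_wpM2l; first exact: h0.
    by move: h1'; rewrite -(ler_nat R) natrD; lra.
  have -> : mu u = 0 by apply: hL.
  by rewrite !mul0r oppr0.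
have HS : sumW N (fun u => mu u * C%:R) = C%:R.
  transitivity (sumW N (fun u => C%:R * mu u)); first by apply: sumW_ext => u _; rewrite mulrC.
  by rewrite sumW_scale mu_total mulr1.
have HS' : sumW N (fun u => - (mu u * C%:R)) = - C%:R.
  transitivity (sumW N (fun u => (-1) * (mu u * C%:R))); first by apply: sumW_ext => u _; rewrite mulN1r.
  by rewrite sumW_scale HS mulN1r.
rewrite E ler_norml; apply/andP; split.
  by rewrite -HS'; apply: sumW_le => u hu; exact: (key u hu).2.
by rewrite -HS; apply: sumW_le => u hu; exact: (key u hu).1.
Qed.
End Meas.

Lemma tdt (T : Type) (Y : seq T) k r m i : r + k <= m ->
  take k (drop r (take m (drop i Y))) = take k (drop (i + r) Y).
Proof.
move=> h; rewrite addnC -drop_drop !take_drop take_takel //; lia.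
Qed.

Section Core.
Variables (A : finType) (sigma : A -> seq A) (v : seq A) (p q : nat).
Local Notation K := (size v).

Definition cnt (Y : seq A) a b := count (fun r => take K (drop r Y) == v) (iota a (b - a)).

Definition idisc (u : seq A) : int := (Posz (q * occ v u) - Posz ((size u - K + 1) * p))%R.

Lemma occ_cnt Y i m : K <= m -> i + m <= size Y ->
  occ v (take m (drop i Y)) = cnt Y i (i + m - K + 1).
Proof.
move=> hK hY; rewrite /occ /cnt size_takel; last by rewrite size_drop; lia.
have -> : i + m - K + 1 - i = (m - K).+1 by lia.
rewrite -{2}(addn0 i) iotaDl count_map; apply: eq_in_count => r.
rewrite mem_iota => /andP[_ hr] /=; rewrite tdt //; lia.
Qed.

Lemma cnt_add Y a b c : a <= b -> b <= c -> cnt Y a c = cnt Y a b + cnt Y b c.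
Proof.
move=> hab hbc; rewrite /cnt -count_cat (_ : c - a = (b - a) + (c - b)); last by lia.
by rewrite iotaD subnKC.
Qed.

Lemma cnt_shift Y a b L : (forall r, a <= r < b -> take K (drop r Y) = take K (drop (r + L) Y)) ->
  cnt Y a b = cnt Y (a + L) (b + L).
Proof.
move=> h; rewrite /cnt (_ : b + L - (a + L) = b - a); last by lia.
rewrite (addnC a L) iotaDl count_map; apply: eq_in_count => r.
rewrite mem_iota => hr /=; rewrite h; first by rewrite (addnC r L).
lia.
Qed.

Hypothesis hK : 0 < K.
Hypothesis cop : coprime p q.

Lemma coreG (Y Z us ul : seq A) i j al be :
  inL sigma Y ->
  (forall u, inL sigma u -> K <= size u -> (idisc u <= idisc us)%R) ->
  (forall u, inL sigma u -> K <= size u -> (idisc ul <= idisc u)%R) ->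
  K <= size us -> K <= size ul ->
  al + size us <= size Z -> take (size us) (drop al Z) = us ->
  be + size ul <= size Z -> take (size ul) (drop be Z) = ul ->
  i <= j -> j + size Z <= size Y ->
  take (size Z) (drop i Y) = Z -> take (size Z) (drop j Y) = Z ->
  q %| j - i.
Proof.
move=> hY hmax hmin hus hul hal Zal hbe Zbe hij hjY Zi Zj.
have hiY : i + size Z <= size Y by lia.
set L := j - i.
have W : forall r, r + K <= size Z -> take K (drop (i + r) Y) = take K (drop (j + r) Y).
  by move=> r hr; rewrite -(tdt _ _ hr) Zi -Zj tdt.
have Wus : forall t, t = i \/ t = j -> take (size us) (drop (t + al) Y) = us.
  by move=> t [->|->]; rewrite -(tdt _ _ hal) ?Zi ?Zj.
have Wul : forall t, t = i \/ t = j -> take (size ul) (drop (t + be) Y) = ul.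
  by move=> t [->|->]; rewrite -(tdt _ _ hbe) ?Zi ?Zj.
have Hmax : (q * cnt Y (i + al) (j + al) <= L * p)%N.
  have hB : (idisc (take (L + size us) (drop (i + al) Y)) <= idisc us)%R.
    apply: hmax; first by apply: inL_factor => //; lia.
    rewrite size_takel; [lia | rewrite size_drop; lia].
  have hocc : occ v us = cnt Y (j + al) (j + al + size us - K + 1).
    by rewrite -{1}(Wus j (or_intror erefl)) occ_cnt; lia.
  move: hB; rewrite /idisc hocc occ_cnt; [|lia|lia].
  rewrite size_takel; last by rewrite size_drop; lia.
  rewrite (@cnt_add Y (i + al) (j + al)); [|lia|lia].
  rewrite (_ : i + al + (L + size us) - K + 1 = j + al + size us - K + 1); last by lia.
  rewrite (_ : L + size us - K + 1 = L + (size us - K + 1)); last by lia.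
  rewrite mulnDr mulnDl; lia.
have Hmin : (L * p <= q * cnt Y (i + be) (j + be))%N.
  have hB : (idisc ul <= idisc (take (L + size ul) (drop (i + be) Y)))%R.
    apply: hmin; first by apply: inL_factor => //; lia.
    rewrite size_takel; [lia | rewrite size_drop; lia].
  have hocc : occ v ul = cnt Y (j + be) (j + be + size ul - K + 1).
    by rewrite -{1}(Wul j (or_intror erefl)) occ_cnt; lia.
  move: hB; rewrite /idisc hocc occ_cnt; [|lia|lia].
  rewrite size_takel; last by rewrite size_drop; lia.
  rewrite (@cnt_add Y (i + be) (j + be)); [|lia|lia].
  rewrite (_ : i + be + (L + size ul) - K + 1 = j + be + size ul - K + 1); last by lia.
  rewrite (_ : L + size ul - K + 1 = L + (size ul - K + 1)); last by lia.
  rewrite mulnDr mulnDl; lia.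
have Eq : forall g d, g <= d -> d + K <= size Z ->
    cnt Y (i + g) (j + g) = cnt Y (i + d) (j + d).
  move=> g d hgd hd.
  have e1 := @cnt_add Y (i + g) (j + g) (j + d) ltac:(lia) ltac:(lia).
  have e2 := @cnt_add Y (i + g) (i + d) (j + d) ltac:(lia) ltac:(lia).
  have e3 : cnt Y (i + g) (i + d) = cnt Y (j + g) (j + d).
    rewrite (_ : j + g = i + g + L); last by lia.
    rewrite (_ : j + d = i + d + L); last by lia.
    apply: cnt_shift => r hr.
    rewrite (_ : r = i + (r - i)); last by lia.
    rewrite W; last by lia.
    congr (take _ (drop _ _)); lia.
  lia.
have E : cnt Y (i + al) (j + al) = cnt Y (i + be) (j + be).
  case: (leqP al be) => h.
    apply: Eq => //; lia.
  symmetry; apply: Eq; lia.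
have : L * p = q * cnt Y (i + al) (j + al) by rewrite E in Hmax *; lia.
move=> hL.
rewrite -(@Gauss_dvdl q _ p); last by rewrite coprime_sym.
by rewrite hL dvdn_mulr.
Qed.
End Core.

Lemma scale_ineq (R : realType) (o n p q C : nat) : (0 < q)%N ->
  (`|o%:R - n%:R * (p%:R / q%:R)| <= C%:R :> R)%R ->
  (q * o <= n * p + q * C)%N /\ (n * p <= q * o + q * C)%N.
Proof.
move=> hq; rewrite ler_norml => /andP[h1 h2].
have hq' : (0 < q%:R :> R)%R by rewrite ltr0n.
have hq0 : (q%:R != 0 :> R)%R by rewrite gt_eqF.
have e : (n%:R * (p%:R / q%:R) * q%:R = (n * p)%:R :> R)%R.
  by rewrite natrM mulrA divfK.
have h2' := ler_wpM2r (ltW hq') h2.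
have h1' := ler_wpM2r (ltW hq') h1.
rewrite mulrBl e in h2' h1'.
split; rewrite -(ler_nat R) !natrD !natrM; rewrite natrM in h1' h2'; nra.
Qed.

Lemma exists_max (P : nat -> Prop) B : (exists n, P n) -> (forall n, P n -> (n <= B)%N) ->
  exists m, P m /\ forall n, P n -> (n <= m)%N.
Proof.
elim: B => [|B IH] [n0 hn0] hb.
  exists n0; split => // n hn; have := hb n hn; have := hb n0 hn0; lia.
case: (classic (P B.+1)) => hB.
  by exists B.+1; split.
apply: IH; first by exists n0.
move=> n hn; have := hb n hn; case: (ltngtP n B.+1) => // e _.
  by rewrite e in hn.
Qed.

Theorem theorem1p2 (A : finType) (sigma : A -> seq A) (R : realType)
    (mu : seq A -> R) (v : seq A) (p q : nat) :
  nonerasing sigma ->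
  primitive sigma ->
  invariant_prob_on_X sigma mu ->
  inL sigma v ->
  0 < q -> coprime p q ->
  mu v = (p%:R / q%:R)%R ->
  balanced_on sigma v ->
  (forall (a : A) (w : seq A), return_word sigma a w -> eventually_divides sigma q w)
  /\ (forall a : A, inL sigma [:: a; a] -> eventually_divides sigma q [:: a])
  /\ (forall a b c : A, inL sigma [:: b; a; c] -> inL sigma [:: b; c] ->
        eventually_divides sigma q [:: a]).
Proof.
move=> ne prim hmu hv hq cop hmuv [C bal].
case: (eqVneq q 1) => [q1|qn1].
  by split; [|split] => *; exists 0 => n _; rewrite q1 dvd1n.
have hK : (0 < size v)%N.
  case E: v => [|e0 v'] //.
  exfalso; move: hmuv; case: hmu => h1 _ _ _ _; rewrite E h1 => h.
  have hq0 : (q%:R != 0 :> R)%R by rewrite pnatr_eq0 -lt0n.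
  have : (p%:R = q%:R :> R)%R by rewrite -[LHS](divfK hq0) -h mul1r.
  move/eqP; rewrite eqr_nat => /eqP pq.
  by move: cop; rewrite pq /coprime gcdnn => /eqP; move/eqP: qn1.
set K := size v.
have hbd : forall u, inL sigma u -> (K <= size u)%N ->
    (- Posz (q * C) <= idisc v p q u <= Posz (q * C))%R.
  move=> u hu hKu.
  have := mu_bound hmu bal hu hKu; rewrite hmuv => /(scale_ineq hq) [i1 i2].
  rewrite /idisc; apply/andP; split; lia.
have [mx [[us [hus [hKus eus]]] hmx]] := @exists_max
  (fun n => exists u, inL sigma u /\ (K <= size u)%N /\ (idisc v p q u + Posz (q * C) = Posz n)%R)
  (2 * (q * C)) ltac:(by exists (absz (idisc v p q v + Posz (q * C))%R), v; split => //; split => //;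
                       have := hbd v hv (leqnn _); lia)
  ltac:(by move=> n [u [hu [hKu e]]]; have := hbd u hu hKu; lia).
have hmax : forall u, inL sigma u -> (K <= size u)%N -> (idisc v p q u <= idisc v p q us)%R.
  move=> u hu hKu.
  have := hmx (absz (idisc v p q u + Posz (q * C))%R).
  have := hbd u hu hKu; move=> hb.
  have /[swap]/[apply] : exists u0, inL sigma u0 /\ (K <= size u0)%N /\
     (idisc v p q u0 + Posz (q * C) = Posz (absz (idisc v p q u + Posz (q * C))%R))%R.
    by exists u; split => //; split => //; lia.
  lia.
have [mn [[ul [hul [hKul eul]]] hmn]] := @exists_max
  (fun n => exists u, inL sigma u /\ (K <= size u)%N /\ (Posz (q * C) - idisc v p q u = Posz n)%R)
  (2 * (q * C)) ltac:(by exists (absz (Posz (q * C) - idisc v p q v)%R), v; split => //; split => //;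
                       have := hbd v hv (leqnn _); lia)
  ltac:(by move=> n [u [hu [hKu e]]]; have := hbd u hu hKu; lia).
have hmin : forall u, inL sigma u -> (K <= size u)%N -> (idisc v p q ul <= idisc v p q u)%R.
  move=> u hu hKu.
  have := hmn (absz (Posz (q * C) - idisc v p q u)%R).
  have := hbd u hu hKu; move=> hb.
  have /[swap]/[apply] : exists u0, inL sigma u0 /\ (K <= size u0)%N /\
     (Posz (q * C) - idisc v p q u0 = Posz (absz (Posz (q * C) - idisc v p q u)%R))%R.
    by exists u; split => //; split => //; lia.
  lia.
have [N1 hN1] := eventually_in ne prim (inL_isl hus).
have [N2 hN2] := eventually_in ne prim (inL_isl hul).
have [e0 _] : exists e : A, true by case: (v) hK => [|e ?] //; exists e.
set Z := subst_iter sigma (N1 + N2) [:: e0].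
have iu : infix us Z by apply: hN1; lia.
have il : infix ul Z by apply: hN2; lia.
have iZ : in_sigma_lang sigma Z by exists (N1 + N2), e0; exact: infix_refl.
have [N3 hN3] := eventually_in ne prim iZ.
case/infixP: iu => [l1 [r1 eZ1]].
case/infixP: il => [l2 [r2 eZ2]].
have G : forall Y0 Y1 Y2, inL sigma (Y0 ++ Z ++ Y1 ++ Z ++ Y2) -> q %| size (Z ++ Y1).
  move=> Y0 Y1 Y2 hY.
  have := @coreG A sigma v p q hK cop (Y0 ++ Z ++ Y1 ++ Z ++ Y2) Z us ul (size Y0)
     (size Y0 + size (Z ++ Y1)) (size l1) (size l2) hY hmax hmin hKus hKul.
  rewrite addKn; apply.
  - by rewrite eZ1 !size_cat addnA leq_addr.
  - by rewrite eZ1 drop_size_cat // take_size_cat.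
  - by rewrite eZ2 !size_cat addnA leq_addr.
  - by rewrite eZ2 drop_size_cat // take_size_cat.
  - lia.
  - rewrite !size_cat; lia.
  - by rewrite drop_size_cat // take_size_cat.
  - have -> : Y0 ++ Z ++ Y1 ++ Z ++ Y2 = (Y0 ++ (Z ++ Y1)) ++ (Z ++ Y2) by rewrite -!catA.
    by rewrite -size_cat drop_size_cat // take_size_cat.
have occZ : forall n e, (N3 <= n)%N -> exists l r, subst_iter sigma n [:: e] = l ++ Z ++ r.
  by move=> n e hn; apply/infixP; apply: hN3.
have P1 : forall (a : A) (w : seq A), return_word sigma a w -> eventually_divides sigma q w.
  move=> a [|b w'] [hw hpre]; first by exists 0 => n _; rewrite si_nil dvdn0.
  move: hpre; rewrite rcons_cons prefix_cons => /andP[/eqP ab _]; subst b.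
  exists N3 => n hn.
  have [l [r E]] := occZ n a hn.
  have hY := inL_si ne n hw.
  rewrite rcons_cons -cats1 si_cons si_cat E in hY.
  have := G l (r ++ subst_iter sigma n w' ++ l) r.
  rewrite si_cons E !size_cat.
  have -> : size Z + (size r + (size (subst_iter sigma n w') + size l)) =
            size l + (size Z + size r) + size (subst_iter sigma n w') by lia.
  apply; move: hY; congr (inL sigma _); rewrite -!catA //.
split; first exact: P1.
split.
  move=> a haa; apply: (P1 a); split => //; by rewrite /= eqxx.
move=> a b c hbac hbc.
exists N3 => n hn.
have [l1' [r1' E1]] := occZ n b hn.
have [l2' [r2' E2]] := occZ n c hn.
have h1 := inL_si ne n hbac.
have h2 := inL_si ne n hbc.
rewrite (si_cons sigma n b) (si_cons sigma n a) E1 E2 in h1.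
rewrite (si_cons sigma n b) E1 E2 in h2.
have g1 := G l1' (r1' ++ subst_iter sigma n [:: a] ++ l2') r2'.
have g2 := G l1' (r1' ++ l2') r2'.
have d1 : q %| size (Z ++ r1' ++ subst_iter sigma n [:: a] ++ l2').
  by apply: g1; move: h1; rewrite -!catA.
have d2 : q %| size (Z ++ r1' ++ l2') by apply: g2; move: h2; rewrite -!catA.
move: d1; rewrite !size_cat.
have -> : size Z + (size r1' + (size (subst_iter sigma n [:: a]) + size l2')) =
          (size Z + (size r1' + size l2')) + size (subst_iter sigma n [:: a]) by lia.
by rewrite dvdn_addr // -!size_cat.
Qed.
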